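(* Let $P>0$ be the least common multiple of the indices in $N$ of the sublattices generated by the vertex sets of all $(d-1)$-simplices with vertices in $\mathcal A$ (i.e. all linearly independent $d$-element subsets of $\mathcal A$). A lattice element $w\in N\cap K$ satisfies $x^w\in M(\beta)$ if and only if there exists an integer $k>0$ such that $(\beta-w)+kPw$ lies in the semigroup generated by the elements of $\mathcal A$.
   Context: $N\cong\mathbb Z^d$ lattice, $M=\mathrm{Hom}(N,\mathbb Z)$, $\mathcal A=\{v_1,\dots,v_n\}\subset N$ generating $N$ with a homomorphism $\mathrm h:N\to\mathbb Z$, $\mathrm h(v_j)=1$; $K=\mathbb R_{\ge0}\mathrm{Conv}(\mathcal A)$; $\Sigma$ the simplicial fan supported on $K$ from a regular triangulation of $\mathrm{Conv}(\mathcal A)$ with vertices in $\mathcal A$; fix $\beta\in N$. $\mathbb C[K,\Sigma]$: basis $x^w$ ($w\in K\cap N$), $x^{w_1}x^{w_2}=x^{w_1+w_2}$ if a cone of $\Sigma$ contains both, else $0$. $\mathrm{Box}(\Sigma)$: $v\in N$ with $v=\sum q_jv_j$, $0\le q_j<1$, $q_j=0$ unless $v_j$ spans a ray of one fixed maximal cone; $\sigma(v)$ the smallest cone containing $v$. $R$: subring generated by $x^{v_j}$ with $\mathbb R_{\ge0}v_j\in\Sigma$. $M(\beta)$: the $R$-submodule generated by $x^v\prod_{j:r_j<0,\ \mathbb R_{\ge0}v_j\in\Sigma,\ \mathbb R_{\ge0}v_j\not\prec\sigma(v)}x^{v_j}$ for all $v\in\mathrm{Box}(\Sigma)$, $r\in\mathbb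 Z^n$ with $v+\sum r_jv_j=\beta$ and $r_j\ge0$ whenever $\mathbb R_{\ge0}v_j\notin\Sigma$. *)

(* Defs.v *)
(* Lattice N = 'rV[int]_d, rational points 'rV[rat]_d,
   A = {v j | j < n}; C[K,Sigma] with coefficients in algC. *)
From HB Require Import structures.
From mathcomp Require Import all_boot all_order all_algebra algC.
From mathcomp Require Import boolp.
Set Implicit Arguments. Unset Strict Implicit. Unset Printing Implicit Defensive.
Import Order.TTheory GRing.Theory Num.Theory.
Local Open Scope ring_scope.

Definition toQ (d : nat) (w : 'rV[int]_d) : 'rV[rat]_d :=
  map_mx (fun z : int => z%:~R) w.

Definition inConeQ (d n : nat) (v : 'I_n -> 'rV[int]_d) (S : {set 'I_n})
  (x : 'rV[rat]_d) : Prop :=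
  exists c : 'I_n -> rat, [/\ forall j, 0 <= c j,
     forall j, j \notin S -> c j = 0 &
     x = \sum_(j < n) c j *: toQ (v j)].

Definition inK (d n : nat) (v : 'I_n -> 'rV[int]_d) (x : 'rV[rat]_d) : Prop :=
  inConeQ v setT x.

Definition lin_indep (d n : nat) (v : 'I_n -> 'rV[int]_d) (S : {set 'I_n}) : Prop :=
  forall c : 'I_n -> rat, \sum_(j in S) c j *: toQ (v j) = 0 ->
    forall j, j \in S -> c j = 0.

(* T = set of maximal simplices (as index sets) of a triangulation of Conv(A)
   with vertices in A; since h(v_j)=1 this is stated via the cones over them *)
Definition is_triangulation (d n : nat) (v : 'I_n -> 'rV[int]_d)
  (T : {set {set 'I_n}}) : Prop :=
  [/\ forall S, S \in T -> #|S| = d /\ lin_indep v S,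
      forall x, inK v x -> exists2 S, S \in T & inConeQ v S x
    & forall S S' x, S \in T -> S' \in T -> inConeQ v S x -> inConeQ v S' x ->
        inConeQ v (S :&: S') x].

(* regularity: a height function omega such that every maximal simplex is a
   lower facet of the lifted configuration (points off the simplex strictly above) *)
Definition is_regular (d n : nat) (v : 'I_n -> 'rV[int]_d)
  (T : {set {set 'I_n}}) : Prop :=
  exists omega : 'I_n -> rat, forall S, S \in T ->
    exists psi : 'cV[rat]_d, forall j,
      (j \in S -> (toQ (v j) *m psi) 0 0 = omega j) /\
      (j \notin S -> (toQ (v j) *m psi) 0 0 < omega j).

(* cones of the fan Sigma: cones over faces of maximal simplices *)
Definition fan_cone (n : nat) (T : {set {set 'I_n}}) (S : {set 'I_n}) : Prop :=
  exists2 S', S' \in T & S \subset S'.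

Definition ray_in_fan (d n : nat) (v : 'I_n -> 'rV[int]_d) (T : {set {set 'I_n}})
  (j : 'I_n) : Prop :=
  exists2 S, fan_cone T S &
    forall x, inConeQ v S x <-> exists2 t : rat, 0 <= t & x = t *: toQ (v j).

Definition in_min_cone (d n : nat) (v : 'I_n -> 'rV[int]_d) (T : {set {set 'I_n}})
  (y x : 'rV[rat]_d) : Prop :=
  forall S, fan_cone T S -> inConeQ v S y -> inConeQ v S x.

Definition ray_face_min (d n : nat) (v : 'I_n -> 'rV[int]_d) (T : {set {set 'I_n}})
  (y : 'rV[rat]_d) (j : 'I_n) : Prop :=
  in_min_cone v T y (toQ (v j)).

Definition in_box (d n : nat) (v : 'I_n -> 'rV[int]_d) (T : {set {set 'I_n}})
  (u : 'rV[int]_d) : Prop :=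
  exists2 S, S \in T & exists q : 'I_n -> rat,
    [/\ forall j, 0 <= q j < 1, forall j, j \notin S -> q j = 0 &
        toQ u = \sum_(j < n) q j *: toQ (v j)].

(* Elements of C[K,Sigma] represented by formal finite sums  sum a_i x^{w_i};
   two formal sums denote the same element iff their coefficient functions agree. *)
Definition fsum (d : nat) := seq (algC * 'rV[int]_d).

Definition coef (d : nat) (f : fsum d) (u : 'rV[int]_d) : algC :=
  \sum_(p <- f | p.2 == u) p.1.

Definition fmon (d : nat) (w : 'rV[int]_d) : fsum d := [:: (1, w)].

Definition common_cone (d n : nat) (v : 'I_n -> 'rV[int]_d) (T : {set {set 'I_n}})
  (w1 w2 : 'rV[int]_d) : bool :=
  `[< exists2 S, S \in T & inConeQ v S (toQ w1) /\ inConeQ v S (toQ w2) >].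

Definition fmul (d n : nat) (v : 'I_n -> 'rV[int]_d) (T : {set {set 'I_n}})
  (f g : fsum d) : fsum d :=
  flatten [seq [seq (p.1 * q.1, p.2 + q.2) | q <- g & common_cone v T p.2 q.2]
          | p <- f].

Definition fprod (d n : nat) (v : 'I_n -> 'rV[int]_d) (T : {set {set 'I_n}})
  (ws : seq 'rV[int]_d) : fsum d :=
  foldr (fun w acc => fmul v T (fmon w) acc) (fmon 0) ws.

Definition fscale (d : nat) (z : int) (f : fsum d) : fsum d :=
  [seq (z%:~R * p.1, p.2) | p <- f].

(* R = subring generated by the x^{v_j} with R_{>=0} v_j in Sigma:
   integer combinations of products of these generators *)
Inductive in_R (d n : nat) (v : 'I_n -> 'rV[int]_d) (T : {set {set 'I_n}}) :
  fsum d -> Prop :=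
| inR_nil : in_R v T [::]
| inR_cons (z : int) (l : seq 'I_n) (f : fsum d) :
    (forall j, j \in l -> ray_in_fan v T j) -> in_R v T f ->
    in_R v T (fscale z (fprod v T [seq v j | j <- l]) ++ f).

Definition gen_of (d n : nat) (v : 'I_n -> 'rV[int]_d) (T : {set {set 'I_n}})
  (u : 'rV[int]_d) (r : 'I_n -> int) : fsum d :=
  fprod v T (u :: [seq v j | j <- enum 'I_n &
      [&& r j < 0, `[< ray_in_fan v T j >] & ~~ `[< ray_face_min v T (toQ u) j >]]]).

Definition is_gen (d n : nat) (v : 'I_n -> 'rV[int]_d) (T : {set {set 'I_n}})
  (beta : 'rV[int]_d) (g : fsum d) : Prop :=
  exists u : 'rV[int]_d, exists r : 'I_n -> int,
    [/\ in_box v T u, u + \sum_(j < n) r j *: v j = beta,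
        forall j, ~ ray_in_fan v T j -> 0 <= r j & g = gen_of v T u r].

Inductive in_M (d n : nat) (v : 'I_n -> 'rV[int]_d) (T : {set {set 'I_n}})
  (beta : 'rV[int]_d) : fsum d -> Prop :=
| inM_nil : in_M v T beta [::]
| inM_cons (rr g f : fsum d) : in_R v T rr -> is_gen v T beta g ->
    in_M v T beta f -> in_M v T beta (fmul v T rr g ++ f).

Definition mono_in_M (d n : nat) (v : 'I_n -> 'rV[int]_d) (T : {set {set 'I_n}})
  (beta w : 'rV[int]_d) : Prop :=
  exists2 f, in_M v T beta f & forall u, coef f u = coef (fmon w) u.

(* P = lcm of |det| (= index in N of the generated sublattice) over all
   linearly independent d-element subsets of A *)
Definition Pidx (d n : nat) (v : 'I_n -> 'rV[int]_d) : nat :=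
  \big[lcmn/1%N]_(f : {ffun 'I_d -> 'I_n} |
       \det ((\matrix_(i < d, k < d) v (f i) ord0 k : 'M[int]_d)) != 0)
    `|\det ((\matrix_(i < d, k < d) v (f i) ord0 k : 'M[int]_d))|%N.

Definition in_semigroup (d n : nat) (v : 'I_n -> 'rV[int]_d) (x : 'rV[int]_d) : Prop :=
  exists c : 'I_n -> nat, x = \sum_(j < n) (c j)%:Z *: v j.

(* Main.v *)
Require Import Defs.
From HB Require Import structures.
From mathcomp Require Import all_boot all_order all_algebra algC.
From mathcomp Require Import boolp.
From mathcomp Require Import ring lra zify.
Import Order.TTheory GRing.Theory Num.Theory.
Local Open Scope ring_scope.
Set Implicit Arguments. Unset Strict Implicit. Unset Printing Implicit Defensive.

Lemma toQD d (x y : 'rV[int]_d) : toQ (x + y) = toQ x + toQ y.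
Proof. by apply/matrixP => i j; rewrite !mxE intrD. Qed.

Lemma toQN d (x : 'rV[int]_d) : toQ (- x) = - toQ x.
Proof. by apply/matrixP => i j; rewrite !mxE intrN. Qed.

Lemma toQB d (x y : 'rV[int]_d) : toQ (x - y) = toQ x - toQ y.
Proof. by rewrite toQD toQN. Qed.

Lemma toQZ d (z : int) (x : 'rV[int]_d) : toQ (z *: x) = z%:~R *: toQ x.
Proof. by apply/matrixP => i j; rewrite !mxE intrM. Qed.

Lemma toQ0 d : toQ (0 : 'rV[int]_d) = 0.
Proof. by apply/matrixP => i j; rewrite !mxE. Qed.

Lemma toQ_sum d (I : Type) (r : seq I) (P : pred I) (F : I -> 'rV[int]_d) :
  toQ (\sum_(i <- r | P i) F i) = \sum_(i <- r | P i) toQ (F i).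
Proof.
elim: r => [|a r IH]; first by rewrite !big_nil toQ0.
by rewrite !big_cons; case: (P a) => //; rewrite toQD IH.
Qed.

Lemma toQ_inj d : injective (@toQ d).
Proof.
move=> x y /matrixP H; apply/matrixP => i j; have := H i j.
by rewrite !mxE => /intr_inj.
Qed.

Lemma cone_sub d n (v : 'I_n -> 'rV[int]_d) (S S' : {set 'I_n}) x :
  S \subset S' -> inConeQ v S x -> inConeQ v S' x.
Proof.
move=> sub [c [c0 cS ->]]; exists c; split => // j jS.
by apply: cS; apply: contra jS; apply: (subsetP sub).
Qed.

Lemma cone0 d n (v : 'I_n -> 'rV[int]_d) (S : {set 'I_n}) : inConeQ v S 0.
Proof.
exists (fun _ => 0); split => //; by rewrite big1 // => j _; rewrite scale0r.
Qed.

Lemma coneD d n (v : 'I_n -> 'rV[int]_d) (S : {set 'I_n}) x y :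
  inConeQ v S x -> inConeQ v S y -> inConeQ v S (x + y).
Proof.
move=> [c [c0 cS ->]] [e [e0 eS ->]]; exists (fun j => c j + e j); split.
- by move=> j; rewrite addr_ge0.
- by move=> j jS; rewrite cS // eS // addr0.
- by rewrite -big_split /=; apply: eq_bigr => j _; rewrite scalerDl.
Qed.

Lemma cone_sum d n (v : 'I_n -> 'rV[int]_d) (S : {set 'I_n}) (xs : seq 'rV[rat]_d) :
  (forall x, x \in xs -> inConeQ v S x) -> inConeQ v S (\sum_(x <- xs) x).
Proof.
elim: xs => [|a xs IH] H; first by rewrite big_nil; apply: cone0.
rewrite big_cons; apply: coneD; first by apply: H; rewrite inE eqxx.
by apply: IH => x xi; apply: H; rewrite inE xi orbT.
Qed.

Lemma cone_v d n (v : 'I_n -> 'rV[int]_d) (S : {set 'I_n}) j :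
  j \in S -> inConeQ v S (toQ (v j)).
Proof.
move=> jS; exists (fun i => (i == j)%:R); split.
- by move=> i; case: (i == j).
- by move=> i iS; case: eqP => // ei; rewrite ei jS in iS.
- rewrite (bigD1 j) //= eqxx scale1r big1 ?addr0 // => i /negPf ->.
  by rewrite scale0r.
Qed.

Lemma sum_supp d n (v : 'I_n -> 'rV[int]_d) (S : {set 'I_n}) (c : 'I_n -> rat) :
  (forall j, j \notin S -> c j = 0) ->
  \sum_(j < n) c j *: toQ (v j) = \sum_(j in S) c j *: toQ (v j).
Proof.
move=> cS; rewrite [RHS]big_mkcond /=; apply: eq_bigr => j _.
by case: ifP => // /negbT /cS ->; rewrite scale0r.
Qed.

Lemma coord_uniq d n (v : 'I_n -> 'rV[int]_d) (S : {set 'I_n}) (c e : 'I_n -> rat) :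
  lin_indep v S ->
  (forall j, j \notin S -> c j = 0) -> (forall j, j \notin S -> e j = 0) ->
  \sum_(j < n) c j *: toQ (v j) = \sum_(j < n) e j *: toQ (v j) ->
  forall j, c j = e j.
Proof.
move=> li cS eS H j.
have H0 : \sum_(j in S) (c j - e j) *: toQ (v j) = 0.
  under eq_bigr do rewrite scalerBl.
  by rewrite sumrB -!sum_supp // H subrr.
case jS: (j \in S); first by apply/eqP; rewrite -subr_eq0; apply/eqP; apply: (li _ H0).
by rewrite cS ?eS // jS.
Qed.

Lemma face2 d n (v : 'I_n -> 'rV[int]_d) (T : {set {set 'I_n}}) (S S' : {set 'I_n}) x y :
  is_triangulation v T -> S \in T -> S' \in T ->
  inConeQ v S' x -> inConeQ v S' y -> inConeQ v S (x + y) -> inConeQ v S x.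
Proof.
move=> [t1 _ t3] ST S'T Hx Hy HS.
have HS' := coneD Hx Hy.
have [g [g0 gS Hg]] := t3 _ _ _ ST S'T HS HS'.
move: Hx Hy Hg => [c [c0 cS ->]] [e [e0 eS ->]].
rewrite -big_split /=.
under eq_bigr do rewrite -scalerDl.
move=> Hg.
have li := (t1 _ S'T).2.
have E := coord_uniq li (c:=fun j => c j + e j) (e:=g).
have gS' : forall j, j \notin S' -> g j = 0.
  by move=> j jS; apply: gS; rewrite inE negb_and jS orbT.
have ce : forall j, j \notin S' -> c j + e j = 0 by move=> j jS; rewrite cS ?eS ?addr0.
have {}E := E ce gS' Hg.
exists c; split => // j jS.
have : c j + e j = 0 by rewrite E gS // inE negb_and jS.
move/eqP; rewrite paddr_eq0 ?c0 ?e0 //.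
by case/andP => /eqP.
Qed.

Lemma subface d n (v : 'I_n -> 'rV[int]_d) (T : {set {set 'I_n}}) (S S' : {set 'I_n})
   (xs : seq 'rV[rat]_d) :
  is_triangulation v T -> S \in T -> S' \in T ->
  (forall x, x \in xs -> inConeQ v S' x) -> inConeQ v S (\sum_(x <- xs) x) ->
  forall x, x \in xs -> inConeQ v S x.
Proof.
move=> tri ST S'T; elim: xs => [|a xs IH] H Hs x //.
rewrite big_cons in Hs.
have Ha : inConeQ v S' a by apply: H; rewrite inE eqxx.
have Hr : inConeQ v S' (\sum_(x <- xs) x).
  by apply: cone_sum => y yi; apply: H; rewrite inE yi orbT.
rewrite inE => /orP [/eqP ->|xi]; first exact: face2 tri ST S'T Ha Hr Hs.
apply: IH => //; first by move=> y yi; apply: H; rewrite inE yi orbT.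
by rewrite addrC in Hs; exact: face2 tri ST S'T Hr Ha Hs.
Qed.

Lemma support d n (v : 'I_n -> 'rV[int]_d) (T : {set {set 'I_n}}) (S S' S'' : {set 'I_n})
  (c : 'I_n -> rat) :
  is_triangulation v T -> S \in T -> S'' \in T -> S' \subset S'' ->
  (forall j, 0 <= c j) -> (forall j, j \notin S -> c j = 0) ->
  inConeQ v S' (\sum_(j < n) c j *: toQ (v j)) ->
  forall j, c j != 0 -> j \in S'.
Proof.
move=> [t1 t2 t3] ST S''T sub c0 cS HS'.
have HS'' := cone_sub sub HS'.
have HS : inConeQ v S (\sum_(j < n) c j *: toQ (v j)) by exists c.
have [g [g0 gS Hg]] := t3 _ _ _ ST S''T HS HS''.
have gS1 : forall j, j \notin S -> g j = 0.
  by move=> j jS; apply: gS; rewrite inE negb_and jS.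
have gS2 : forall j, j \notin S'' -> g j = 0.
  by move=> j jS; apply: gS; rewrite inE negb_and jS orbT.
have E1 := coord_uniq (t1 _ ST).2 cS gS1 Hg.
move: HS' => [e [e0 eS He]].
have eS2 : forall j, j \notin S'' -> e j = 0.
  by move=> j jS; apply: eS; apply: contra jS; apply: (subsetP sub).
have E2 := coord_uniq (t1 _ S''T).2 gS2 eS2 (etrans (esym Hg) He).
move=> j; rewrite E1 E2; apply: contraR => /eS ->; by [].
Qed.

Definition colQ d (h : 'cV[int]_d) : 'cV[rat]_d := map_mx (fun z : int => z%:~R) h.

Lemma hval d (x : 'rV[int]_d) (h : 'cV[int]_d) :
  (toQ x *m colQ h) 0 0 = ((x *m h) 0 0)%:~R.
Proof.
rewrite !mxE rmorph_sum /=; apply: eq_bigr => k _; by rewrite !mxE intrM.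
Qed.

Lemma ray_mem d n (v : 'I_n -> 'rV[int]_d) (h : 'cV[int]_d) (T : {set {set 'I_n}}) j :
  injective v -> (forall j, (v j *m h) 0 0 = 1) ->
  ray_in_fan v T j -> exists2 S, S \in T & j \in S.
Proof.
move=> vinj hv [S0 [S1 S1T sub] iff].
have Hj : inConeQ v S0 (toQ (v j)) by apply/iff; exists 1; rewrite ?scale1r.
suff jS0 : j \in S0 by exists S1 => //; apply: (subsetP sub).
have all_j : forall i, i \in S0 -> i = j.
  move=> i iS; have [t t0 Ht] := (iff _).1 (cone_v v iS).
  have : (toQ (v i) *m colQ h) 0 0 = ((t *: toQ (v j)) *m colQ h) 0 0 by rewrite Ht.
  rewrite hval -scalemxAl [X in _ = X]mxE hval !hv mulr1 => t1.
  by apply: vinj; apply: toQ_inj; rewrite Ht -t1 scale1r.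
apply/negPn/negP => jn; move: Hj => [c [c0 cS Hc]].
have : toQ (v j) = 0.
  rewrite Hc big1 // => i _; case iS: (i \in S0).
  - by move: jn; rewrite -(all_j i iS) iS.
  - by rewrite cS ?iS // scale0r.
move=> /(congr1 (fun x => (x *m colQ h) 0 0)); rewrite hval hv mul0mx mxE.
by move/eqP; rewrite oner_eq0.
Qed.

Lemma ray_of_S d n (v : 'I_n -> 'rV[int]_d) (T : {set {set 'I_n}}) S i :
  S \in T -> i \in S -> ray_in_fan v T i.
Proof.
move=> ST iS; exists [set i]; first by exists S => //; rewrite sub1set.
move=> x; split.
- move=> [c [c0 cS ->]]; exists (c i) => //.
  rewrite (bigD1 i) //= big1 ?addr0 // => j ji; rewrite cS ?scale0r //.
  by rewrite inE.
- move=> [t t0 ->]; exists (fun j => if j == i then t else 0); split.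
  + by move=> j; case: ifP.
  + by move=> j; rewrite inE => /negPf ->.
  + rewrite (bigD1 i) //= eqxx big1 ?addr0 // => j /negPf ->.
    by rewrite scale0r.
Qed.

Lemma Pidx_gt0 d n (v : 'I_n -> 'rV[int]_d) : (0 < Pidx v)%N.
Proof.
rewrite /Pidx; apply: (big_ind (fun m => 0 < m)%N) => //.
- by move=> x y x0 y0; rewrite lcmn_gt0 x0 y0.
- by move=> f; rewrite absz_gt0.
Qed.

Lemma int_coord d n (v : 'I_n -> 'rV[int]_d) (T : {set {set 'I_n}}) S
  (x : 'rV[int]_d) (a : 'I_n -> rat) :
  is_triangulation v T -> S \in T -> (forall j, j \notin S -> a j = 0) ->
  toQ x = \sum_(j < n) a j *: toQ (v j) ->
  forall j, exists z : int, (Pidx v)%:R * a j = z%:~R.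
Proof.
move=> [t1 _ _] ST aS Hx.
have [HS li] := t1 S ST.
pose f : {ffun 'I_d -> 'I_n} := [ffun i => enum_val (cast_ord (esym HS) i)].
have fS : forall i, f i \in S by move=> i; rewrite ffunE; apply: enum_valP.
have finj : injective f.
  move=> i i'; rewrite !ffunE => /enum_val_inj/(congr1 (cast_ord HS)).
  by rewrite !cast_ordKV.
have reidx : forall (V : nmodType) (F : 'I_n -> V),
    \sum_(j in S) F j = \sum_(i < d) F (f i).
  move=> V F; rewrite big_enum_val (reindex (cast_ord (esym HS))) /=.
    by apply: eq_bigr => i _; rewrite ffunE.
  by exists (cast_ord HS) => i _; rewrite ?cast_ordK ?cast_ordKV.
pose M : 'M[int]_d := \matrix_(i < d, k < d) v (f i) ord0 k.
pose MQ : 'M[rat]_d := map_mx intr M.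
have mulMQ : forall y : 'rV[rat]_d, y *m MQ = \sum_(i < d) y 0 i *: toQ (v (f i)).
  move=> y; apply/matrixP => i k; rewrite !mxE summxE; apply: eq_bigr => l _.
  by rewrite !mxE (ord1 i).
have D0 : \det M != 0.
  apply/negP => /eqP D0.
  have : \det MQ == 0 by rewrite det_map_mx D0.
  case/det0P => y y0 Hy.
  pose c := fun j => \sum_(i < d) y 0 i * (f i == j)%:R.
  have cf : forall i, c (f i) = y 0 i.
    move=> i; rewrite /c (bigD1 i) //= eqxx mulr1 big1 ?addr0 // => i' ii'.
    by case: eqP => [/finj /eqP|]; rewrite ?(negPf ii') ?mulr0.
  have Hc : \sum_(j in S) c j *: toQ (v j) = 0.
    rewrite reidx -[RHS]Hy mulMQ; apply: eq_bigr => i _; by rewrite cf.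
  move/negP: y0; apply; apply/eqP/matrixP => i k; rewrite (ord1 i) mxE -cf.
  by apply: li Hc _ (fS k).
pose al : 'rV[rat]_d := \row_i a (f i).
have Hal : al *m MQ = toQ x.
  rewrite mulMQ Hx (sum_supp v aS) reidx; apply: eq_bigr => i _; by rewrite mxE.
have Hadj : (\det M)%:~R *: al = map_mx intr (x *m \adj M).
  rewrite map_mxM map_mx_adj -[map_mx intr x]/(toQ x) -Hal -mulmxA mul_mx_adj.
  by rewrite mul_mx_scalar det_map_mx.
have dvd : (\det M %| (Pidx v)%:Z)%Z.
  rewrite dvdzE /=; apply: (biglcmn_sup f) => //.
have [q Hq] := dvdzP dvd.
move=> j; case jS: (j \in S); last first.
  by exists 0; rewrite aS ?jS // mulr0.
have [i ->] : exists i, j = f i.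
  exists (cast_ord HS (enum_rank_in jS j)).
  by rewrite ffunE cast_ordK enum_rankK_in.
exists (q * (x *m \adj M) 0 i).
have E : (\det M)%:~R * a (f i) = ((x *m \adj M) 0 i)%:~R.
  have := congr1 (fun m : 'rV[rat]_d => m 0 i) Hadj.
  by rewrite /= [in LHS]mxE [in LHS]mxE => ->; rewrite mxE.
by rewrite -[(Pidx v)%:R]/((Pidx v)%:Z%:~R) Hq !intrM -mulrA E.
Qed.

Lemma mem_fmul d n (v : 'I_n -> 'rV[int]_d) (T : {set {set 'I_n}}) (f g : fsum d) p :
  p \in fmul v T f g -> exists p1, exists q,
    [/\ p1 \in f, q \in g, common_cone v T p1.2 q.2 & p = (p1.1 * q.1, p1.2 + q.2)].
Proof.
rewrite /fmul => /flattenP [s /mapP [p1 p1f ->]] /mapP [q].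
rewrite mem_filter => /andP [cc qg] ->.
by exists p1, q.
Qed.

Lemma fprod_inv d n (v : 'I_n -> 'rV[int]_d) (T : {set {set 'I_n}}) (ws : seq 'rV[int]_d) p :
  is_triangulation v T -> p \in Defs.fprod v T ws ->
  p.2 = \sum_(x <- ws) x /\
  (ws = [::] \/ exists2 S, S \in T & forall x, x \in ws -> inConeQ v S (toQ x)).
Proof.
move=> tri; elim: ws p => [|a ws IH] p.
  by rewrite /= inE => /eqP ->; split; [rewrite big_nil|left].
move=> /mem_fmul [p1 [q [p1f qg /asboolP [S ST [Ha Hq]] ->]]].
move: p1f Ha; rewrite inE => /eqP -> /= Ha.
have [q2 Hws] := IH q qg.
split; first by rewrite big_cons q2.
right; exists S => // x; rewrite inE => /orP [/eqP ->|xi].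
  exact: Ha.
case: Hws => [E|[S' S'T HS']]; first by rewrite E in xi.
have := @subface d n v T S S' [seq toQ y | y <- ws] tri ST S'T.
rewrite big_map -toQ_sum -q2 => /(_ _ Hq) H.
apply: H; first by move=> y /mapP [z zi ->]; apply: HS'.
exact: map_f.
Qed.

Lemma cone_sumQ d n (v : 'I_n -> 'rV[int]_d) (S : {set 'I_n}) (ws : seq 'rV[int]_d) :
  (forall x, x \in ws -> inConeQ v S (toQ x)) -> inConeQ v S (toQ (\sum_(x <- ws) x)).
Proof.
elim: ws => [|a ws IH] H; first by rewrite big_nil toQ0; apply: cone0.
rewrite big_cons toQD; apply: coneD; first by apply: H; rewrite inE eqxx.
by apply: IH => x xi; apply: H; rewrite inE xi orbT.
Qed.

Lemma fprod_val d n (v : 'I_n -> 'rV[int]_d) (T : {set {set 'I_n}}) (ws : seq 'rV[int]_d) S :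
  S \in T -> (forall x, x \in ws -> inConeQ v S (toQ x)) ->
  Defs.fprod v T ws = [:: (1, \sum_(x <- ws) x)].
Proof.
move=> ST; elim: ws => [|a ws IH] H; first by rewrite big_nil.
rewrite /= IH; last by move=> x xi; apply: H; rewrite inE xi orbT.
have cc : common_cone v T a (\sum_(x <- ws) x).
  apply/asboolP; exists S => //; split; first by apply: H; rewrite inE eqxx.
  by apply: cone_sumQ => x xi; apply: H; rewrite inE xi orbT.
by rewrite /fmul /= cc /= mulr1 big_cons.
Qed.

Lemma inR_inv d n (v : 'I_n -> 'rV[int]_d) (T : {set {set 'I_n}}) rr p :
  is_triangulation v T -> in_R v T rr -> p \in rr ->
  exists l : seq 'I_n, [/\ forall j, j \in l -> ray_in_fan v T j,
    p.2 = \sum_(x <- map v l) x &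
    l = [::] \/ exists2 S, S \in T & forall j, j \in l -> inConeQ v S (toQ (v j))].
Proof.
move=> tri; elim=> [|z l f Hl HR IH]; first by [].
rewrite mem_cat => /orP [/mapP [p' p'i ->] /=|]; last exact: IH.
have [p2 Hc] := fprod_inv tri p'i.
exists l; split => //.
case: Hc => [E|[S ST HS]]; first by left; case: l E {Hl p'i p2}.
by right; exists S => // j jl; apply: HS; apply: map_f.
Qed.

Definition Econd d n (v : 'I_n -> 'rV[int]_d) (T : {set {set 'I_n}})
  (u : 'rV[int]_d) (r : 'I_n -> int) (j : 'I_n) : bool :=
  [&& r j < 0, `[< ray_in_fan v T j >] & ~~ `[< ray_face_min v T (toQ u) j >]].

Lemma gen_ofE d n (v : 'I_n -> 'rV[int]_d) (T : {set {set 'I_n}}) u r :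
  gen_of v T u r = Defs.fprod v T (u :: map v (filter (Econd v T u r) (enum 'I_n))).
Proof. by []. Qed.

Lemma inM_inv d n (v : 'I_n -> 'rV[int]_d) (T : {set {set 'I_n}}) beta f p :
  is_triangulation v T -> in_M v T beta f -> p \in f ->
  exists u, exists r, exists l : seq 'I_n,
   [/\ in_box v T u, u + \sum_(j < n) r j *: v j = beta,
       forall j, ~ ray_in_fan v T j -> 0 <= r j,
       forall j, j \in l -> ray_in_fan v T j &
       p.2 = \sum_(x <- map v l) x + \sum_(x <- u :: map v (filter (Econd v T u r) (enum 'I_n))) x
       /\ exists2 S, S \in T & inConeQ v S (toQ u) /\
          forall j, j \in l ++ filter (Econd v T u r) (enum 'I_n) -> inConeQ v S (toQ (v j))].
Proof.
move=> tri; elim=> [|rr g f0 HR [u [r [ub ubeta rnr ->]]] HM IH]; first by [].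
rewrite mem_cat => /orP [|]; last exact: IH.
move=> /mem_fmul [p1 [q [p1r qg /asboolP [S3 S3T [H1 H2]] ->]]].
have [l [lray p1l lc]] := inR_inv tri HR p1r.
rewrite gen_ofE in qg.
set E := filter _ _ in qg *.
have [q2 qc] := fprod_inv tri qg.
exists u, r, l; split => //; split; first by rewrite /= p1l q2.
exists S3 => //.
have Hg : forall x, x \in u :: map v E -> inConeQ v S3 (toQ x).
  case: qc => [//|[S2 S2T HS2]].
  have := @subface d n v T S3 S2 [seq toQ y | y <- u :: map v E] tri S3T S2T.
  rewrite big_map -toQ_sum -q2 => /(_ _ H2) H x xi.
  apply: H; first by move=> y /mapP [z zi ->]; apply: HS2.
  exact: map_f.
split; first by apply: Hg; rewrite inE eqxx.
move=> j; rewrite mem_cat => /orP [jl|jE]; last first.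
  by apply: Hg; rewrite inE map_f ?orbT.
case: lc => [le|[S1 S1T HS1]]; first by rewrite le in jl.
have := @subface d n v T S3 S1 [seq toQ (v y) | y <- l] tri S3T S1T.
have e : \sum_(x <- [seq toQ (v y) | y <- l]) x = toQ p1.2.
  by rewrite p1l toQ_sum !big_map.
rewrite e => /(_ _ H1) H; apply: H; first by move=> y /mapP [z zi ->]; apply: HS1.
exact: (map_f (fun y => toQ (v y))).
Qed.

Lemma sum_count d n (v : 'I_n -> 'rV[int]_d) (l : seq 'I_n) :
  \sum_(x <- map v l) x = \sum_(j < n) (count_mem j l)%:Z *: v j.
Proof.
elim: l => [|a l IH].
  by rewrite big_nil big1 // => j _; rewrite scale0r.
rewrite /= big_cons IH.
rewrite [RHS](eq_bigr (fun j => (a == j)%:R *: v j + (count_mem j l)%:Z *: v j)); last first.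
  by move=> j _; rewrite PoszD scalerDl; case: (a == j).
rewrite big_split /=; congr (_ + _).
rewrite (bigD1 a) //= eqxx scale1r big1 ?addr0 // => j /negPf.
by rewrite eq_sym => ->; rewrite scale0r.
Qed.

Lemma count_filter_enum n (P : pred 'I_n) j :
  count_mem j (filter P (enum 'I_n)) = P j.
Proof.
rewrite count_uniq_mem; last by rewrite filter_uniq // enum_uniq.
by rewrite mem_filter mem_enum andbT.
Qed.

Lemma count_flat n (m : 'I_n -> nat) j :
  count_mem j (flatten [seq nseq (m i) i | i <- enum 'I_n]) = m j.
Proof.
rewrite count_flatten -map_comp.
have -> : forall s : seq 'I_n, sumn [seq ((count_mem j) \o (fun i => nseq (m i) i)) x | x <- s]
   = \sum_(i <- s) ((i == j) * m i)%N.
  by elim=> [|a s IH]; rewrite ?big_nil // big_cons /= IH count_nseq.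
rewrite big_enum /= (bigD1 j) //= eqxx mul1n big1; first by rewrite addr0.
by move=> i /negPf ->.
Qed.

Lemma ind_sum d n (v : 'I_n -> 'rV[int]_d) j :
  \sum_(i < n) (i == j)%:R *: toQ (v i) = toQ (v j).
Proof.
rewrite (bigD1 j) //= eqxx scale1r big1 ?addr0 // => i /negPf ->.
by rewrite scale0r.
Qed.

Lemma ray_in_cone d n (v : 'I_n -> 'rV[int]_d) (h : 'cV[int]_d) (T : {set {set 'I_n}})
  (S' S'' : {set 'I_n}) j :
  injective v -> (forall j, (v j *m h) 0 0 = 1) -> is_triangulation v T ->
  ray_in_fan v T j -> S'' \in T -> S' \subset S'' ->
  inConeQ v S' (toQ (v j)) -> j \in S'.
Proof.
move=> vinj hv tri rj S''T sub Hj.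
have [SR SRT jSR] := ray_mem vinj hv rj.
have := @support d n v T SR S' S'' (fun i => (i == j)%:R) tri SRT S''T sub.
rewrite ind_sum => H; apply: (H _ _ Hj).
- by move=> i; case: (i == j).
- by move=> i iS; case: eqP => // e; rewrite e jSR in iS.
- by rewrite eqxx oner_eq0.
Qed.

Lemma toQ_lin d n (v : 'I_n -> 'rV[int]_d) (c : 'I_n -> int) :
  toQ (\sum_(j < n) c j *: v j) = \sum_(j < n) (c j)%:~R *: toQ (v j).
Proof. by rewrite toQ_sum; apply: eq_bigr => j _; rewrite toQZ. Qed.

Lemma fwd d n (v : 'I_n -> 'rV[int]_d) (h : 'cV[int]_d) (T : {set {set 'I_n}}) beta w :
  injective v -> (forall j, (v j *m h) 0 0 = 1) -> is_triangulation v T ->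
  mono_in_M v T beta w ->
  exists2 k : nat, (0 < k)%N & in_semigroup v (beta - w + (k * Pidx v)%:Z *: w).
Proof.
move=> vinj hv tri [f fM fc].
have : has (fun p => p.2 == w) f.
  apply/negPn/negP => hn; have := fc w.
  rewrite /coef big_hasC // /fmon big_cons /= eqxx big_nil addr0 => /eqP.
  by rewrite eq_sym oner_eq0.
case/hasP => p pf /eqP pw.
have [u [r [l [ub ubeta rnr lray [p2 [S ST [uS jS]]]]]]] := inM_inv tri fM pf.
move: p2 jS; set E := filter _ _ => p2 jS.
have [e [e0 eS ue]] := uS.
have Eray : forall j, j \in E -> ray_in_fan v T j.
  by move=> j; rewrite mem_filter => /andP [/and3P [_ /asboolP ? _] _].
have inS : forall j, j \in l ++ E -> j \in S.
  move=> j jlE; apply: (ray_in_cone vinj hv tri _ ST (subxx S) (jS j jlE)).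
  by move: jlE; rewrite mem_cat => /orP [/lray|/Eray].
pose cE j : nat := count_mem j E.
pose cl j : nat := count_mem j l.
pose a j : rat := e j + (cE j)%:R + (cl j)%:R.
have a0 : forall j, 0 <= a j by move=> j; rewrite /a !addr_ge0.
have aS : forall j, j \notin S -> a j = 0.
  move=> j jS'; rewrite /a eS //.
  have : j \notin E by apply: contra jS' => jE; apply: inS; rewrite mem_cat jE orbT.
  have : j \notin l by apply: contra jS' => jl; apply: inS; rewrite mem_cat jl.
  by rewrite /cE /cl => /count_memPn -> /count_memPn ->; rewrite !mulr0n !addr0.
have hw : toQ w = \sum_(j < n) a j *: toQ (v j).
  rewrite -pw p2 big_cons !sum_count !toQD !toQ_lin ue.
  rewrite -!big_split /=; apply: eq_bigr => j _.
  by rewrite /a !scalerDl addrC.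
have H : forall j, exists z : int, (Pidx v)%:R * a j == z%:~R.
  by move=> j; have [z Hz] := int_coord tri ST aS hw j; exists z; apply/eqP.
pose z j := xchoose (H j).
have Hz : forall j, (Pidx v)%:R * a j = (z j)%:~R by move=> j; apply/eqP; exact: (xchooseP (H j)).
pose k := (\sum_(j < n) (`|r j| + 1 + cl j))%N.+1.
exists k => //.
pose q j : int := r j - (cE j)%:Z - (cl j)%:Z + k%:Z * z j.
have qpos : forall j, 0 <= q j.
  move=> j; have [aj0|ajn0] := eqVneq (a j) 0.
    have [ej cEj clj] : [/\ e j = 0, cE j = 0%N & cl j = 0%N].
      move: aj0; rewrite /a => /eqP; rewrite paddr_eq0 ?addr_ge0 //.
      case/andP; rewrite paddr_eq0 // => /andP [/eqP -> ]; rewrite !pnatr_eq0.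
      by move=> /eqP -> /eqP ->.
    have zj : z j = 0.
      by apply/eqP; rewrite -(intr_eq0 rat) -Hz aj0 mulr0.
    rewrite /q cEj clj zj mulr0 addr0 !subr0.

    rewrite leNgt; apply/negP => rlt.
    have [rj|nrj] := pselect (ray_in_fan v T j); last first.
      by move: (rnr j nrj); rewrite leNgt rlt.
    have jE : j \notin E by apply/count_memPn.
    have face : ray_face_min v T (toQ u) j.
      move: jE; rewrite mem_filter mem_enum andbT /Econd rlt /= (asboolT rj) /= negbK.
      by move/asboolP.
    pose S' := [set i in S | e i != 0].
    have : j \in S'.
      apply: (ray_in_cone vinj hv tri rj ST (S':=S')).
        by apply/subsetP => i; rewrite inE => /andP [].
      apply: face; first by exists S => //; apply/subsetP => i; rewrite inE => /andP[].
      exists e; split => // i; rewrite inE negb_and negbK => /orP [/eS|/eqP] //.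
    by rewrite inE ej eqxx andbF.
  have ajp : 0 < a j by rewrite lt_def ajn0 a0.
  have zp : 0 < z j.
    by rewrite -(ltr0z rat) -Hz mulr_gt0 // ltr0n Pidx_gt0.
  have kb : (`|r j| + 1 + cl j <= k)%N.
    by rewrite /k; apply: leqW; rewrite (bigD1 j) //= leq_addr.
  have cEb : (cE j <= 1)%N by rewrite /cE count_filter_enum leq_b1.
  have kz : k%:Z <= k%:Z * z j by rewrite ler_peMr.
  rewrite /q; lia.
exists (fun j => `|q j|%N); apply: toQ_inj.
rewrite toQ_lin toQD toQB toQZ -ubeta toQD toQ_lin hw ue.
rewrite scaler_sumr -sumrN -!big_split; apply: eq_bigr => j _ /=.
rewrite gez0_abs ?qpos // scalerA -scaleNr -!scalerDl; congr (_ *: _).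
rewrite -[((k * Pidx v)%N%:Z)%:~R]/(((k * Pidx v)%N)%:R) natrM -mulrA Hz /q /a.
rewrite !intrD !intrN intrM -[((cE j)%:Z)%:~R]/((cE j)%:R) -[((cl j)%:Z)%:~R]/((cl j)%:R).
rewrite -[(k%:Z)%:~R]/(k%:R).
ring.
Qed.

Lemma bwd d n (v : 'I_n -> 'rV[int]_d) (T : {set {set 'I_n}}) beta w :
  is_triangulation v T -> inK v (toQ w) ->
  (exists2 k : nat, (0 < k)%N & in_semigroup v (beta - w + (k * Pidx v)%:Z *: w)) ->
  mono_in_M v T beta w.
Proof.
move=> tri wK [k k0 [c Hc]].
have [t1 t2 t3] := tri.
have [S ST [a [a0 aS ha]]] := t2 _ wK.
have H : forall j, exists z : int, (Pidx v)%:R * a j == z%:~R.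
  by move=> j; have [z Hz] := int_coord tri ST aS ha j; exists z; apply/eqP.
pose z j := xchoose (H j).
have Hz : forall j, (Pidx v)%:R * a j = (z j)%:~R.
  by move=> j; apply/eqP; exact: (xchooseP (H j)).
have zS : forall j, j \notin S -> z j = 0.
  by move=> j jS; apply/eqP; rewrite -(intr_eq0 rat) -Hz aS ?mulr0.
pose fl j := Num.floor (a j).
pose qf j := a j - (fl j)%:~R.
pose u := w - \sum_(j < n) fl j *: v j.
have hu : toQ u = \sum_(j < n) qf j *: toQ (v j).
  rewrite toQB toQ_lin ha -sumrB; apply: eq_bigr => j _; by rewrite scalerBl.
have fl0 : forall j, 0 <= fl j by move=> j; rewrite floor_ge0.
have qf0 : forall j, 0 <= qf j by move=> j; rewrite subr_ge0 floor_le.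
have qf1 : forall j, qf j < 1.
  move=> j; rewrite ltrBlDl; apply: (lt_le_trans (floorD1_gt (a j))); by rewrite intrD.
have flS : forall j, j \notin S -> fl j = 0 by move=> j jS; rewrite /fl aS // floor0.
have qS : forall j, j \notin S -> qf j = 0 by move=> j jS; rewrite /qf aS // flS // subr0.
have ub : in_box v T u.
  exists S => //; exists qf; split => //; by move=> j; rewrite qf0 qf1.
pose r j : int := (c j)%:Z + fl j - k%:Z * z j.
have ubeta : u + \sum_(j < n) r j *: v j = beta.
  have Hb : beta = \sum_(j < n) (c j)%:Z *: v j + (w - (k * Pidx v)%N%:Z *: w).
    by rewrite -Hc addrA (addrAC _ _ w) subrK addrK.
  apply: toQ_inj; rewrite Hb !toQD !toQN toQZ !toQ_lin ha scaler_sumr -!sumrN.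
  rewrite -!big_split; apply: eq_bigr => j _ /=.
  rewrite scalerA -!scaleNr -!scalerDl; congr (_ *: _).
  rewrite -[((k * Pidx v)%N%:Z)%:~R]/(((k * Pidx v)%N)%:R) natrM -mulrA Hz /r.
  rewrite !intrD !intrN intrM -[((c j)%:Z)%:~R]/((c j)%:R) -[(k%:Z)%:~R]/(k%:R).
  ring.
have rnr : forall j, ~ ray_in_fan v T j -> 0 <= r j.
  move=> j nr; have jS : j \notin S by apply/negP => jS; apply: nr; exact: ray_of_S ST jS.
  by rewrite /r flS // zS // mulr0 subr0 addr0.
pose E := filter (Econd v T u r) (enum 'I_n).
have ES : forall j, j \in E -> [/\ j \in S, qf j = 0 & 1 <= fl j].
  move=> j; rewrite mem_filter mem_enum andbT => /and3P [rlt /asboolP rj /asboolP nf].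
  have jS : j \in S.
    apply/negPn/negP => jS; move: rlt; rewrite /r flS // zS // mulr0 subr0 addr0.
    by rewrite ltNge.
  have qj : qf j = 0.
    apply/eqP/negPn/negP => qn; apply: nf => S' [S'' S''T sub] Hu.
    rewrite hu in Hu.
    have := support tri ST S''T sub qf0 qS Hu qn => jS'.
    exact: cone_v.
  split => //; rewrite -gtz0_ge1 lt_def fl0 andbT; apply/negP => /eqP f0.
  have a0j : a j = 0 by move: qj; rewrite /qf f0 subr0.
  have zj : z j = 0 by apply/eqP; rewrite -(intr_eq0 rat) -Hz a0j mulr0.
  by move: rlt; rewrite /r f0 zj mulr0 subr0 addr0 ltNge.
pose m j : nat := (`|fl j| - (j \in E))%N.
pose L := flatten [seq nseq (m j) j | j <- enum 'I_n].
have LS : forall j, j \in L -> j \in S.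
  move=> j jL; apply/negPn/negP => jS.
  have : count_mem j L != 0%N by apply/negP => /eqP/count_memPn; rewrite jL.
  by rewrite count_flat /m flS.
have uS : inConeQ v S (toQ u) by rewrite hu; exists qf.
have gval : gen_of v T u r = [:: (1, u + \sum_(x <- map v E) x)].
  rewrite gen_ofE (fprod_val (S := S)) ?big_cons // => x.
  rewrite inE => /orP [/eqP -> //|/mapP [j jE ->]].
  by have [jS _ _] := ES j jE; apply: cone_v.
have Lcone : forall x, x \in map v L -> inConeQ v S (toQ x).
  by move=> x /mapP [j jL ->]; apply: cone_v; apply: LS.
have rrval : Defs.fprod v T (map v L) = [:: (1, \sum_(x <- map v L) x)].
  exact: fprod_val ST Lcone.
pose rr := fscale 1 (Defs.fprod v T [seq v j | j <- L]) ++ [::].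
have HR : in_R v T rr.
  apply: inR_cons; last exact: inR_nil.
  move=> j jL; exact: (ray_of_S v ST (LS j jL)).
have Hg : is_gen v T beta (gen_of v T u r) by exists u, r; split.
exists (fmul v T rr (gen_of v T u r) ++ [::]).
  exact: inM_cons HR Hg (inM_nil _ _ _).
have cc : common_cone v T (\sum_(x <- map v L) x) (u + \sum_(x <- map v E) x).
  apply/asboolP; exists S => //; split; first exact: cone_sumQ.
  rewrite toQD; apply: coneD => //; apply: cone_sumQ => x /mapP [j jE ->].
  by have [jS _ _] := ES j jE; apply: cone_v.
have sumw : \sum_(x <- map v L) x + (u + \sum_(x <- map v E) x) = w.
  rewrite !sum_count addrCA /u -addrA -[RHS]addr0; congr (_ + _).
  rewrite -sumrN -!big_split big1 // => j _ /=.
  rewrite count_flat /E count_filter_enum -scaleNr -!scalerDl.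
  suff -> : (- fl j + (Posz (m j) + Posz (Econd v T u r j))) = 0 by rewrite scale0r.
  rewrite /m -PoszD; case jE: (Econd v T u r j).
    have [_ _ f1] : [/\ j \in S, qf j = 0 & 1 <= fl j].
      by apply: ES; rewrite mem_filter mem_enum jE.
    have jE' : j \in E by rewrite mem_filter mem_enum jE.
    rewrite jE' /=; move: (fl0 j); lia.
  have jE' : j \in E = false by rewrite mem_filter mem_enum jE.
  rewrite jE' /=; move: (fl0 j); lia.
move=> x; rewrite /rr rrval /= gval /fmul /= cc /= mulr1 mul1r sumw.
by [].
Qed.

Theorem proposition2p14 (d n : nat) (v : 'I_n -> 'rV[int]_d) (h : 'cV[int]_d)
  (T : {set {set 'I_n}}) (beta w : 'rV[int]_d) :
  injective v ->
  (forall x : 'rV[int]_d, exists c : 'I_n -> int, x = \sum_(j < n) c j *: v j) ->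
  (forall j, (v j *m h) 0 0 = 1) ->
  is_triangulation v T -> is_regular v T ->
  inK v (toQ w) ->
  (mono_in_M v T beta w <->
   exists2 k : nat, (0 < k)%N &
     in_semigroup v (beta - w + (k * Pidx v)%:Z *: w)).
Proof.
move=> vinj _ hv tri _ wK; split.
- exact: fwd vinj hv tri.
- exact: bwd tri wK.
Qed.
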